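(* Let $T$ be a tree on $n \geq 3$ vertices. Then $T$ is saturated if and only if $T = K_{1,n-1}$.
   Context: All graphs are finite and simple. A degree monotone path in a graph $G$ is a path $v_1v_2\ldots v_m$ such that $\deg(v_1)\le \cdots\le \deg(v_m)$ or $\deg(v_1)\ge \cdots\ge \deg(v_m)$; its length is its number of vertices. $mp(G)$ denotes the maximum length of a degree monotone path in $G$. A graph $G$ is saturated if $mp(G+e)>mp(G)$ for every pair $e$ of non-adjacent vertices of $G$, where $G+e$ is $G$ with the edge $e$ added. *)

(* Defs.v *)
From mathcomp Require Import all_boot.
Set Implicit Arguments. Unset Strict Implicit. Unset Printing Implicit Defensive.

Definition simple_graph (V : finType) (e : rel V) : Prop :=
  symmetric e /\ irreflexive e.

Section Graphs.
Variable V : finType.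
Implicit Types (e : rel V).

Definition deg e (x : V) : nat := #|[set y | e x y]|.

Definition is_path e (p : seq V) : bool :=
  if p is x :: q then path e x q && uniq p else false.

Definition dm_path e (p : seq V) : bool :=
  is_path e p &&
  (sorted leq (map (deg e) p) || sorted geq (map (deg e) p)).

Definition mp e : nat :=
  \max_(k < #|V|.+1 | [exists p : k.-tuple V, dm_path e p]) k.

Definition add_edge e (u v : V) : rel V :=
  fun x y => [|| e x y, (x == u) && (y == v) | (x == v) && (y == u)].

Definition saturated e : Prop :=
  forall u v : V, u != v -> ~~ e u v -> mp e < mp (add_edge e u v).

Definition connected e : Prop := forall x y : V, connect e x y.

Definition acyclic e : Prop :=
  ~ exists c : seq V, [/\ 3 <= size c, uniq c & cycle e c].

Definition is_tree e : Prop := simple_graph e /\ connected e /\ acyclic e.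

(* G is (isomorphic to) the star K_{1,n-1}, n = #|V|: some centre vertex
   adjacent to all others, and no other edges. *)
Definition is_star e : Prop :=
  exists c : V, forall x y : V, e x y = (x != y) && ((x == c) || (y == c)).

End Graphs.

(* Main.v *)
Require Import Defs.
From mathcomp Require Import all_boot.
Set Implicit Arguments. Unset Strict Implicit. Unset Printing Implicit Defensive.

Lemma deg_ge1 (V : finType) (e : rel V) v a : e v a -> 0 < deg e v.
Proof.
move=> eva; rewrite /deg card_gt0; apply/set0Pn; exists a; by rewrite inE.
Qed.

Lemma deg_ge2 (V : finType) (e : rel V) v a b : e v a -> e v b -> a != b -> 1 < deg e v.
Proof.
move=> ea eb ab; rewrite /deg.
have : [set a; b] \subset [set y | e v y].
  by apply/subsetP=> y; rewrite !inE => /orP[] /eqP->.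
by move/subset_leq_card; rewrite cards2 ab.
Qed.

Lemma deg_le1 (V : finType) (e : rel V) v a b : deg e v <= 1 -> e v a -> e v b -> a = b.
Proof.
move=> d ea eb; apply/eqP; apply: contraTT d => ab.
by rewrite -ltnNge; apply: deg_ge2 ea eb ab.
Qed.

Lemma deg_le2 (V : finType) (e : rel V) v a b c : deg e v <= 2 -> e v a -> e v b -> e v c ->
  a != b -> a != c -> b != c -> False.
Proof.
move=> d ea eb ec ab ac bc.
have : a |: [set b; c] \subset [set y | e v y].
  by apply/subsetP=> y; rewrite !inE => /orP[/eqP->|/orP[] /eqP->].
move/subset_leq_card; rewrite cardsU1 cards2 bc !inE negb_or ab ac /=.
by rewrite /deg in d => h; have := leq_trans h d.
Qed.

Lemma mp_ge (V : finType) (e : rel V) p : dm_path e p -> size p <= mp e.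
Proof.
move=> dp.
have hu : uniq p by move: dp; case: p => // a r /andP[/andP[_ ->]].
have hs : size p < #|V|.+1 by rewrite ltnS -(card_uniqP hu) max_card.
rewrite /mp; apply: (@leq_bigmax_cond _ _ (fun k : 'I_#|V|.+1 => nat_of_ord k) (Ordinal hs)).
by apply/existsP; exists (in_tuple p).
Qed.

Lemma mp_le (V : finType) (e : rel V) m : (forall p, dm_path e p -> size p <= m) -> mp e <= m.
Proof.
move=> h; apply/bigmax_leqP => k /existsP[t dt].
by have := h _ dt; rewrite size_tuple.
Qed.

Lemma dm_rev (V : finType) (e : rel V) p : symmetric e -> dm_path e p -> dm_path e (rev p).
Proof.
move=> se; case: p => // a r.
rewrite /dm_path => /andP[/andP[pa ua] so].
apply/andP; split.
  have -> : rev (a :: r) = last a r :: rev (belast a r) by rewrite lastI rev_rcons.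
  apply/andP; split; last by rewrite -rev_rcons -lastI rev_uniq.
  rewrite rev_path.
  by rewrite (eq_path (e' := e)) // => y z; rewrite /= se.
rewrite map_rev !rev_sorted.
by case/orP: so => ->; rewrite ?orbT.
Qed.

Lemma nbr_next (V : finType) (e : rel V) a s u : path e a s -> uniq (a :: s) ->
  u \in a :: s -> u != last a s -> exists2 n, n \in a :: s & (n != u) && e u n.
Proof.
elim: s a => [|b s IH] a /=; first by rewrite inE => _ _ ->.
case/andP=> eab ps /andP[]; rewrite inE negb_or => /andP[ab _] ub.
rewrite inE => /orP[/eqP->|us] hl.
  by exists b; rewrite ?inE ?eqxx ?orbT // eq_sym ab eab.
have [n nin h] := IH b ps ub us hl.
by exists n => //; rewrite inE nin orbT.
Qed.

Lemma nbr_prev (V : finType) (e : rel V) a s u : symmetric e -> path e a s -> uniq (a :: s) ->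
  u \in a :: s -> u != a -> exists2 n, n \in a :: s & (n != u) && e u n.
Proof.
move=> se; elim: s a => [|b s IH] a /=; first by rewrite inE => _ _ ->.
case/andP=> eab ps /andP[]; rewrite inE negb_or => /andP[ab _] ub.
rewrite inE => /orP[/eqP->|]; first by rewrite eqxx.
rewrite inE => /orP[/eqP->|us] _.
  by exists a; rewrite ?inE ?eqxx // ab se.
have ubs : u \in b :: s by rewrite inE us orbT.
have ub' : u != b by move: ub => /= /andP[bs _]; apply: contraNneq bs => <-.
have [n nin h] := IH b ps ub ubs ub'.
by exists n => //; rewrite inE nin orbT.
Qed.

Lemma nbr_int (V : finType) (e : rel V) a s u : symmetric e -> path e a s -> uniq (a :: s) ->
  u \in a :: s -> u != a -> u != last a s ->
  exists p n, [/\ p \in a :: s, n \in a :: s, p != u, n != u & [/\ p != n, e u p & e u n]].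
Proof.
move=> se; elim: s a => [|b s IH] a /=; first by rewrite inE => _ _ ->.
case/andP=> eab ps /andP[]; rewrite inE negb_or => /andP[ab an] ub.
rewrite inE => /orP[/eqP->|]; first by rewrite eqxx.
rewrite inE => /orP[/eqP->|us] _ hl.
  case: s ps an ub hl {IH} => [|c s] /=; first by rewrite eqxx.
  case/andP=> ebc _; rewrite inE negb_or => /andP[ac _]; rewrite inE negb_or => /andP[bc _] _.
  case/andP: bc => bc _.
  exists a, c; split; rewrite ?inE ?eqxx ?orbT //; first by rewrite eq_sym.
  by rewrite ac se eab ebc.
have ubs : u \in b :: s by rewrite inE us orbT.
have ub' : u != b by move: ub => /= /andP[bs _]; apply: contraNneq bs => <-.
have [p [n [pin nin pu nu h]]] := IH b ps ub ubs ub' hl.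
by exists p, n; split; rewrite // inE ?pin ?nin orbT.
Qed.

Lemma boundary (V : finType) (e : rel V) (S : seq V) x y : connected e ->
  x \notin S -> y \in S -> exists u z, [/\ u \in S, z \notin S & e u z].
Proof.
move=> con xS yS; have /connectP[p pp xe] := con y x.
move: xS; rewrite xe => xS {xe}.
elim: p y yS pp xS => [|b p IH] y yS /=; first by rewrite yS.
case/andP=> eyb pp xS.
case bS: (b \in S); last by exists y, b; rewrite bS.
exact: IH bS pp xS.
Qed.

Lemma keyK (V : finType) (e : rel V) x l q : symmetric e -> irreflexive e -> connected e ->
  path e l q -> uniq (l :: q) -> x \notin l :: q -> deg e l = 1 ->
  {in q, forall y, deg e y <= 2} -> 2 <= deg e x ->
  exists2 s, dm_path e s & size q + 2 <= size s.
Proof.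
move=> se ie con pq uq xS dl dq dx.
have [u [z [uS zS euz]]] := boundary con xS (mem_head l q).
have ut : u = last l q.
  apply/eqP; apply/negPn/negP => ut.
  case: (eqVneq u l) => [ul|ul].
    have [n nin /andP[_ eun]] := nbr_next pq uq uS ut.
    have nz : n != z by apply: contraNneq zS => <-.
    by have := deg_ge2 eun euz nz; rewrite ul dl.
  have [p [n [pin nin _ _ [pn eup eun]]]] := nbr_int se pq uq uS ul ut.
  have pz : p != z by apply: contraNneq zS => <-.
  have nz : n != z by apply: contraNneq zS => <-.
  have uq' : u \in q by move: uS; rewrite inE (negbTE ul).
  exact: (deg_le2 (dq u uq') eup eun euz pn pz nz).
have zl : z != l by apply: contraNneq zS => ->; exact: mem_head.
case: q pq uq xS dq zS ut uS => [|b q'] pq uq xS dq zS ut uS.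
  exists [:: l; z]; last by [].
  rewrite /= in ut; subst u.
  rewrite /dm_path /is_path /= euz inE eq_sym zl /= andbT.
  by rewrite dl (deg_ge1 (a := l)) // se.
set q := b :: q' in pq uq xS dq zS ut uS *.
have tq : u \in q by rewrite ut /q /=; exact: mem_last.
have lq : l \notin q by case/andP: uq.
have tl : u != l by apply: contraNneq lq => <-.
have [pr prin /andP[_ epr]] := nbr_prev se pq uq uS tl.
have prz : pr != z by apply: contraNneq zS => <-.
have dt2 : deg e u = 2 by apply/eqP; rewrite eqn_leq dq // (deg_ge2 epr euz prz).
have dz : 2 <= deg e z.
  rewrite leqNgt ltnS; apply/negP => dz.
  have zx : z != x by apply: contraTneq dz => ->; rewrite -ltnNge.
  set S' := l :: rcons q z.
  have pS' : path e l (rcons q z) by rewrite rcons_path pq -ut euz.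
  have uS' : uniq S' by rewrite /S' -rcons_cons rcons_uniq zS uq.
  have xS' : x \notin S' by rewrite /S' -rcons_cons mem_rcons inE negb_or eq_sym zx xS.
  have [u' [z' [u'S z'S euz']]] := boundary con xS' (mem_head l _).
  have lS : last l (rcons q z) = z by rewrite last_rcons.
  case: (eqVneq u' z) => [u'z|u'z].
    have u'l : u' != l by rewrite u'z.
    have [n nin /andP[_ eun]] := nbr_prev se pS' uS' u'S u'l.
    have nz : n != z' by apply: contraNneq z'S => <-.
    by have := deg_ge2 eun euz' nz; rewrite u'z ltnNge dz.
  have u'last : u' != last l (rcons q z) by rewrite lS.
  case: (eqVneq u' l) => [u'l|u'l].
    have [n nin /andP[_ eun]] := nbr_next pS' uS' u'S u'last.
    have nz : n != z' by apply: contraNneq z'S => <-.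
    by have := deg_ge2 eun euz' nz; rewrite u'l dl.
  have [p [n [pin nin _ _ [pn eup eun]]]] := nbr_int se pS' uS' u'S u'l u'last.
  have pz : p != z' by apply: contraNneq z'S => <-.
  have nz : n != z' by apply: contraNneq z'S => <-.
  have u'q : u' \in q by move: u'S; rewrite /S' inE (negbTE u'l) mem_rcons inE (negbTE u'z).
  exact: (deg_le2 (dq u' u'q) eup eun euz' pn pz nz).
have d2 : {in q, forall y, deg e y = 2}.
  move=> y yq; case: (eqVneq y u) => [->//|yu].
  have yS : y \in l :: q by rewrite inE yq orbT.
  have yl : y != l by apply: contraNneq lq => <-.
  have ylast : y != last l q by rewrite -ut.
  have [p [n [_ _ _ _ [pn eyp eyn]]]] := nbr_int se pq uq yS yl ylast.
  by apply/eqP; rewrite eqn_leq dq // (deg_ge2 eyp eyn pn).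
exists (l :: rcons q z); last by rewrite /= size_rcons addn2.
have hp : path (relpre (deg e) leq) l q.
  rewrite /q /=; rewrite /q /= in pq; case/andP: pq => elb pq'.
  rewrite dl d2 ?mem_head //=.
  apply: (sub_in_path (P := fun y => deg e y == 2) (e := e)); last by [].
    by move=> y w /eqP hy /eqP hw _; rewrite /= hy hw.
  by apply/allP => y yq; rewrite d2.
rewrite /dm_path /is_path; apply/andP; split.
  apply/andP; split; first by rewrite rcons_path pq -ut euz.
  by rewrite -rcons_cons rcons_uniq zS uq.
apply/orP; left.
rewrite (_ : sorted _ _ = path (relpre (deg e) leq) l (rcons q z)); last by rewrite /= path_map.
by rewrite rcons_path hp -ut /= dt2 dz.
Qed.

Lemma add_edge_sym (V : finType) (e : rel V) x l : symmetric e -> symmetric (add_edge e x l).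
Proof.
move=> se u v; rewrite /add_edge se; case: (e v u) => //=.
by rewrite orbC andbC [(v == l) && _]andbC.
Qed.

Lemma deg_add_x (V : finType) (e : rel V) x l : x != l -> ~~ e x l ->
  deg (add_edge e x l) x = (deg e x).+1.
Proof.
move=> xl nxl; rewrite /deg.
have -> : [set y | add_edge e x l x y] = l |: [set y | e x y].
  apply/setP=> y; rewrite !inE /add_edge eqxx /= (negbTE xl) /= orbF orbC.
  by rewrite (eq_sym y).
by rewrite cardsU1 inE nxl.
Qed.

Lemma deg_add_l (V : finType) (e : rel V) x l : symmetric e -> x != l -> ~~ e x l ->
  deg (add_edge e x l) l = (deg e l).+1.
Proof.
move=> se xl nxl; rewrite /deg.
have -> : [set y | add_edge e x l l y] = x |: [set y | e l y].
  apply/setP=> y; rewrite !inE /add_edge eqxx /= eq_sym (negbTE xl) /= orbC.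
  by rewrite (eq_sym y).
by rewrite cardsU1 inE se nxl.
Qed.

Lemma deg_add_o (V : finType) (e : rel V) x l y : y != x -> y != l ->
  deg (add_edge e x l) y = deg e y.
Proof.
move=> yx yl; rewrite /deg.
suff -> : [set z | add_edge e x l y z] = [set z | e y z] by [].
apply/setP=> z; by rewrite !inE /add_edge (negbTE yx) (negbTE yl) /= orbF.
Qed.

Lemma add_eq (V : finType) (e : rel V) x l (P : pred V) : (forall u, P u -> u != l) ->
  {in P &, add_edge e x l =2 e}.
Proof.
move=> hP u v /hP ul /hP vl; rewrite /add_edge (negbTE ul) (negbTE vl) /=.
by case: (e u v); case: (u == x); case: (v == x); case: (u == l); case: (v == l).
Qed.

Lemma add_eq' (V : finType) (e : rel V) x l (P : pred V) : (forall u, P u -> u != x) ->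
  {in P &, add_edge e x l =2 e}.
Proof.
move=> hP u v /hP ux /hP vx; rewrite /add_edge (negbTE ux) (negbTE vx) /=.
by case: (e u v); case: (u == x); case: (v == x); case: (u == l); case: (v == l).
Qed.

Lemma main_le (V : finType) (e : rel V) x l : symmetric e -> irreflexive e -> connected e ->
  (forall y, deg e y <= deg e x) -> 2 <= deg e x -> deg e l = 1 -> x != l -> ~~ e x l ->
  mp (add_edge e x l) <= mp e.
Proof.
move=> se ie con dmax dx dl xl nxl.
set e' := add_edge e x l.
set f := deg e'; set g := deg e.
have fx : f x = (g x).+1 by exact: deg_add_x.
have fl : f l = 2 by rewrite /f deg_add_l // dl.
have fo : forall y, y != x -> y != l -> f y = g y by move=> y; exact: deg_add_o.
have Fmax : forall y, y != x -> f y <= g x.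
  move=> y yx; case: (eqVneq y l) => [->|yl]; first by rewrite fl.
  by rewrite fo.
have Lfg : forall y z, y != l -> z != l -> f z <= f y -> g z <= g y.
  move=> y z yl zl h; case: (eqVneq y x) => [->|yx]; first exact: dmax.
  case: (eqVneq z x) => [zx|zx].
    by have := leq_trans h (Fmax y yx); rewrite zx fx ltnn.
  by rewrite -fo // -(fo y).
have trans_f : transitive (relpre f geq).
  by move=> y z w /= h1 h2; apply: leq_trans h2 h1.
have transfer : forall a s, all (fun y => y != l) (a :: s) ->
    path (relpre f geq) a s -> path (relpre g geq) a s.
  move=> a s hall; apply: sub_in_path hall => y z yl zl /=; exact: Lfg.
have Ldesc : forall p, is_path e' p -> sorted geq (map f p) -> size p <= mp e.
  case=> // a r /andP[pr ur]; rewrite /= path_map => sr.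
  have xr : x \notin r.
    apply/negP => xr.
    have /allP /(_ x xr) /= := order_path_min trans_f sr.
    case: (eqVneq a x) => [ax|ax].
      by move: ur; rewrite /= ax xr.
    by rewrite fx => h; have := leq_trans h (Fmax a ax); rewrite ltnn.
  have bound2 : forall y, y \in r -> f y <= f a.
    by move=> y yr; have /allP /(_ y yr) := order_path_min trans_f sr.
  case lp : (l \in a :: r).
    case: (eqVneq a l) => [al|al].
      subst a.
      have xin : x \notin l :: r by rewrite inE negb_or xr xl.
      have pe : path e l r.
        rewrite -(eq_in_path (@add_eq' V e x l (fun u => u \in l :: r) _)) //.
          by move=> u uin; apply: contraNneq xin => <-.
      have dq : {in r, forall y, deg e y <= 2}.
        move=> y yr.
        have yx : y != x by apply: contraNneq xr => <-.
        have yl : y != l by move: ur => /= /andP[lr _]; apply: contraNneq lr => <-.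
        by have := bound2 y yr; rewrite fl fo.
      have [s ds hs] := keyK se ie con pe ur xin dl dq dx.
      by apply: leq_trans (mp_ge ds); apply: leq_trans hs; rewrite addn2.
    have lr : l \in r by move: lp; rewrite inE eq_sym (negbTE al).
    case/splitPr: lr pr ur sr bound2 xr => r1 r2 pr ur sr bound2 xr.
    case: (boolP ((a == x) && (r1 == [::]))) => [/andP[/eqP ax /eqP r1e]|hn].
      subst a r1; rewrite /= in pr ur sr bound2 xr.
      case/andP: pr => _ pr; case/andP: sr => _ sr.
      have xin := xr.
      case/andP: ur => _ ur.
      have pe : path e l r2.
        rewrite -(eq_in_path (@add_eq' V e x l (fun u => u \in l :: r2) _)) //.
          by move=> u uin; apply: contraNneq xin => <-.
      have dq : {in r2, forall y, deg e y <= 2}.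
        move=> y yr.
        have /allP /(_ y yr) /= := order_path_min trans_f sr.
        have yx : y != x by apply: contraNneq xr => <-; rewrite inE yr orbT.
        have yl : y != l by move: ur => /= /andP[lr _]; apply: contraNneq lr => <-.
        by rewrite fl fo.
      have [s ds hs] := keyK se ie con pe ur xin dl dq dx.
      by apply: leq_trans (mp_ge ds); apply: leq_trans hs; rewrite /= addn2.
    have ucat : uniq ((a :: r1) ++ l :: r2) by [].
    move: (ucat); rewrite cat_uniq => /and3P[u1 hdis u2].
    have lnot1 : l \notin a :: r1.
      by apply/negP => h; move/hasPn: hdis => /(_ l (mem_head _ _)); rewrite h.
    set b := last a r1.
    have bin : b \in a :: r1 by exact: mem_last.
    have gen : forall s, ~~ ((a == x) && (s == [::])) -> x \notin s ++ l :: r2 -> last a s != x.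
      case=> [|c s] h hx /=; first by apply: contraNneq h => ->; rewrite eqxx.
      by apply: contraNneq hx => <-; rewrite mem_cat mem_last.
    have bx : b != x by apply: gen.
    move: (pr); rewrite cat_path => /andP[pr1 /= /andP[ebl pr2]].
    have ebl' : e b l by move: ebl; rewrite /e' /add_edge (negbTE bx) /= [l == x]eq_sym (negbTE xl) andbF orbF.
    have r2e : r2 = [::].
      case: r2 pr2 hdis u2 xr ucat {ur sr bound2 pr gen} => [//|c r2] /andP[elc _] hdis _ xr _.
      have cx : c != x by apply: contraNneq xr => <-; by rewrite mem_cat !inE eqxx !orbT.
      have elc' : e l c by move: elc; rewrite /e' /add_edge (negbTE cx) [l == x]eq_sym (negbTE xl) /= !andbF !orbF.
      have cb : c = b by apply: (deg_le1 (v := l) _ elc'); [rewrite dl | rewrite se].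
      by move/hasPn: hdis => /(_ c); rewrite !inE eqxx orbT => /(_ isT); rewrite cb -in_cons bin.
    subst r2.
    have all1 : all (fun y => y != l) (a :: r1).
      by apply/allP => y yin; apply: contraNneq lnot1 => <-.
    have dp : dm_path e (a :: r1 ++ [:: l]).
      rewrite /dm_path /is_path ur andbT /=.
      rewrite cat_path /= andbT -(eq_in_path (@add_eq V e x l (fun u => u \in a :: r1) _)) //; last first.
        by move=> u uin; apply: contraNneq lnot1 => <-.
      rewrite pr1 ebl' /=.
      apply/orP; right.
      rewrite path_map cat_path /= andbT.
      move: sr; rewrite cat_path /= andbT => /andP[s1 _].
      apply/andP; split; first exact: transfer.
      by rewrite dl (deg_ge1 (a := l)).
    exact: mp_ge dp.
  have all1 : all (fun y => y != l) (a :: r).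
    by apply/allP => y yin; apply: contraNneq (negbT lp) => <-.
  have dp : dm_path e (a :: r).
    rewrite /dm_path /is_path ur andbT /=.
    rewrite -(eq_in_path (@add_eq V e x l (fun u => u \in a :: r) _)) //; last first.
      by move=> u uin; apply: contraNneq (negbT lp) => <-.
    rewrite pr /=; apply/orP; right; rewrite path_map; exact: transfer.
  exact: mp_ge dp.
apply: mp_le => p dp.
have se' : symmetric e' by exact: add_edge_sym.
case/andP: (dp) => ip /orP[] so; last exact: Ldesc.
have dr := dm_rev se' dp.
rewrite -size_rev; apply: Ldesc; first by case/andP: dr.
by rewrite map_rev rev_sorted.
Qed.

Lemma pen (V : finType) (e : rel V) x p z : irreflexive e -> acyclic e ->
  path e x p -> uniq (x :: p) -> z \in p -> e (last x p) z -> z = nth x (rev p) 1.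
Proof.
move=> ie ac pp up zp etz.
case/splitPr: zp pp up etz => s1 s2 pp up etz.
move: pp; rewrite cat_path => /andP[_ /= /andP[_ ps2]].
rewrite last_cat /= in etz.
have us2 : uniq (z :: s2).
  by move: up; rewrite /= cat_uniq => /andP[_ /and3P[]].
clear up; case: s2 ps2 etz us2 => [|w [|w' s2]] ps2 etz us2.
- by rewrite /= ie in etz.
- by rewrite rev_cat.
- exfalso; apply: ac; exists [:: z, w, w' & s2]; split => //.
  by rewrite /cycle rcons_path ps2 etz.
Qed.

Lemma ext (V : finType) (e : rel V) x : symmetric e -> irreflexive e -> acyclic e ->
  forall n p, #|V| - size p <= n -> path e x p -> uniq (x :: p) -> 2 <= size p ->
  exists p', [/\ path e x p', uniq (x :: p'), 2 <= size p' & deg e (last x p') <= 1].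
Proof.
move=> se ie ac; elim=> [|n IH] p hn pp up sp.
  have h1 : #|x :: p| <= #|V| := max_card _.
  have h2 := card_uniqP up; rewrite h2 /= in h1; exfalso.
  move: hn; rewrite leqn0 subn_eq0 => hn; have := leq_trans h1 hn; by rewrite ltnn.
case: (leqP (deg e (last x p)) 1) => dt; first by exists p.
have /card_gt1P [z1 [z2 [z1in z2in z12]]] := dt.
rewrite !inE in z1in z2in.
have hsz : size (x :: p) <= #|V|.
  have h1 : #|x :: p| <= #|V| := max_card _.
  by have h2 := card_uniqP up; rewrite h2 in h1.
have try_ext : forall z, e (last x p) z -> z \notin x :: p -> exists p',
   [/\ path e x p', uniq (x :: p'), 2 <= size p' & deg e (last x p') <= 1].
  move=> z ez zn; apply: (IH (rcons p z)).
  - by rewrite size_rcons subnS; move: hn; case: (_ - _).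
  - by rewrite rcons_path pp ez.
  - by rewrite -rcons_cons rcons_uniq zn up.
  - by rewrite size_rcons ltnS ltnW.
case z1n: (z1 \in x :: p); last by apply: try_ext z1in (negbT z1n).
case z2n: (z2 \in x :: p); last by apply: try_ext z2in (negbT z2n).
have noX : forall z, e (last x p) z -> z = x -> False.
  move=> z ez zx; apply: ac; exists (x :: p); split => //; try exact: sp.
  by subst z; rewrite /cycle rcons_path pp ez.
have z1p : z1 \in p by move: z1n; rewrite inE => /orP[/eqP/(noX _ z1in)|].
have z2p : z2 \in p by move: z2n; rewrite inE => /orP[/eqP/(noX _ z2in)|].
have h1 := pen ie ac pp up z1p z1in.
have h2 := pen ie ac pp up z2p z2in.
by move: z12; rewrite h1 h2 eqxx.
Qed.

Lemma find_leaf (V : finType) (e : rel V) x y : symmetric e -> irreflexive e -> acyclic e ->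
  connected e -> y != x -> ~~ e x y ->
  exists l, [/\ l != x, ~~ e x l & deg e l = 1] /\ exists b, 1 < deg e b.
Proof.
move=> se ie ac con yx nxy.
have /connectP[p0 pp0 ye] := con x y.
case: (shortenP pp0) ye => p pp up _ ye.
have sp : 2 <= size p.
  case: p pp up ye => [|b [|c p]] //= pp up ye.
    by rewrite -ye eqxx in yx.
  by move: pp; rewrite -ye andbT (negbTE nxy).
have hb : exists b, 1 < deg e b.
  case: p pp up sp {ye} => [|b [|c p]] pp up sp; [by []|by []|].
  move: pp up => /= /andP[exb /andP[ebc _]] /andP[xn _].
  exists b; apply: (deg_ge2 (a := x) (b := c)); first by rewrite se.
    exact: ebc.
  by move: xn; rewrite !inE; case: (x == c); rewrite ?orbT.
have [p' [pp' up' sp' dl]] := ext se ie ac (leqnn _) pp up sp.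
set l := last x p' in dl.
have gl : forall s, 0 < size s -> last x s \in s by case => // b q _ /=; exact: mem_last.
have lp : l \in p' := gl p' (ltnW sp').
have lx : l != x by apply: contraTneq lp => ->; case/andP: up'.
have [n _ /andP[_ eln]] := nbr_prev se pp' up' (mem_last x p') lx.
exists l; split; last exact: hb.
split => //.
  apply/negP => exl; apply: ac; exists (x :: p'); split => //; try exact: sp'.
  by rewrite /cycle rcons_path pp' se.
by apply/eqP; rewrite eqn_leq dl (deg_ge1 eln).
Qed.

Lemma star_sat (V : finType) (e : rel V) : is_star e -> saturated e.
Proof.
case=> c hc u v uv nuv.
have se : symmetric e by move=> a b; rewrite !hc eq_sym orbC.
have uc : u != c by apply: contraNneq nuv => uc'; rewrite hc uv /= uc' eqxx.
have vc : v != c by apply: contraNneq nuv => vc'; rewrite hc uv /= vc' eqxx orbT.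
have leaf : forall a, a != c -> deg e a <= 1.
  move=> a ac; rewrite /deg -(cards1 c); apply: subset_leq_card.
  by apply/subsetP=> y; rewrite !inE hc (negbTE ac) /= => /andP[_].
have mp2 : mp e <= 2.
  apply: mp_le => p; case: p => [|a [|b [|d p]]] // /andP[/andP[pp up] so].
  move: pp up => /= /and3P[eab ebd _] /andP[]; rewrite !inE negb_or => /andP[_ ad] _.
  have bc : b = c.
    apply/eqP; apply/negPn/negP => bc.
    move: eab ebd; rewrite !hc (negbTE bc) !orbF /= => /andP[_ /eqP ac] /andP[_ /eqP dc].
    by move: ad; rewrite ac dc eqxx.
  subst b.
  have ac : a != c by move: eab; rewrite hc => /andP[].
  have dc : d != c by move: ebd; rewrite hc eq_sym => /andP[].
  have eca : e c a by rewrite se.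
  have ad' : a != d by move: ad; rewrite negb_or => /andP[].
  have db := deg_ge2 eca ebd ad'.
  move: so => /orP[] /= /and3P[h1 h2 _].
    by have := leq_trans h2 (leaf d dc); rewrite leqNgt db.
  by have := leq_trans h1 (leaf a ac); rewrite leqNgt db.
set e' := add_edge e u v.
have e'uv : e' u v by rewrite /e' /add_edge !eqxx orbT.
have e'vc : e' v c by rewrite /e' /add_edge hc vc eqxx orbT.
have e'uc : e' u c by rewrite /e' /add_edge hc uc eqxx orbT.
have se' : symmetric e' by exact: add_edge_sym.
have up2 : forall a b, a != c -> b != c -> a != b -> (a == u) && (b == v) || (a == v) && (b == u) ->
    deg e' a <= 2.
  move=> a b ac bc ab hab; rewrite /deg; apply: (@leq_trans #|[set c; b]|); last first.
    by rewrite cards2; case: (c != b).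
  apply: subset_leq_card; apply/subsetP => y; rewrite !inE /e' /add_edge hc (negbTE ac) /=.
  case/orP: hab => /andP[/eqP -> /eqP ->].
    by case/orP=> [/andP[_ ->]|/orP[/andP[_ ->]|/andP[/eqP uv' _]]] //; rewrite ?orbT //; move: uv; rewrite uv' eqxx.
  by case/orP=> [/andP[_ ->]|/orP[/andP[/eqP uv' _]|/andP[_ ->]]] //; rewrite ?orbT //; move: uv; rewrite uv' eqxx.
have dp : dm_path e' [:: u; v; c].
  rewrite /dm_path /is_path /= e'uv e'vc !inE negb_or uv uc vc /=.
  apply/orP; left; rewrite /= andbT.
  have dv : deg e' v = 2.
    have evu : e' v u by rewrite se'.
    apply/eqP; rewrite eqn_leq; apply/andP; split; last exact: deg_ge2 evu e'vc uc.
    apply: (up2 v u) => //; first by rewrite eq_sym.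
    by rewrite !eqxx orbT.
  have ecu : e' c u by rewrite se'.
  have ecv : e' c v by rewrite se'.
  rewrite dv (up2 u v) ?eqxx //=.
  exact: deg_ge2 ecu ecv uv.
have := mp_ge dp; rewrite /= => h.
by apply: leq_trans h; rewrite ltnS.
Qed.
Unset Implicit Arguments.

Theorem corollary2p3 (V : finType) (e : rel V) :
  3 <= #|V| -> is_tree e -> (saturated e <-> is_star e).
Proof.
move=> hV [[se ie] [con ac]]; split; last exact: star_sat.
move=> sat.
have [v0 _] : exists v0 : V, true.
  have : 0 < #|V| by apply: leq_trans hV.
  by case/card_gt0P => v0 _; exists v0.
case: (@arg_maxnP V v0 predT (deg e) isT) => x _ xmax.
have all_adj : forall y, y != x -> e x y.
  move=> y yx; apply/negPn/negP => nxy.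
  have [l [[lx nxl dl] [b db]]] := find_leaf se ie ac con yx nxy.
  have dx : 1 < deg e x := leq_trans db (xmax b isT).
  have xl : x != l by rewrite eq_sym.
  have h := main_le se ie con (fun y => xmax y isT) dx dl xl nxl.
  by have := sat x l xl nxl; rewrite ltnNge h.
exists x => u w.
case: (eqVneq u x) => [->|ux].
  rewrite /= andbT; case: (eqVneq x w) => [<-|xw]; first by rewrite ie.
  by rewrite all_adj // eq_sym.
case: (eqVneq w x) => [->|wx].
  by rewrite orbT andbT se all_adj // ux.
rewrite /= andbF.
apply/negP => euw; apply: ac; exists [:: x; u; w]; split => //.
  rewrite /= !inE negb_or andbT eq_sym ux eq_sym wx /=.
  by apply: contraNneq (negbT (ie u)) => {2}->.
by rewrite /cycle /= all_adj // euw se all_adj.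
Qed.
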